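(* Let $n\ge0$ be an integer with $\chi_n>c^2$, and let $x<y$ be two roots of $\psi_n$ in $(1,\infty)$. Then $$|\psi_n'(x)|\frac{x^2-1}{y^2-1}\le|\psi_n'(y)|\le|\psi_n'(x)|\sqrt{\frac{x^2-1}{x^2-\chi_n/c^2}\cdot\frac{y^2-\chi_n/c^2}{y^2-1}}.$$
   Context: For a real number $c>0$, let $\psi_0,\psi_1,\dots$ be the prolate spheroidal wave functions of band limit $c$: the real $L^2[-1,1]$-normalized eigenfunctions of $F_c[\varphi](x)=\int_{-1}^1\varphi(t)e^{icxt}\,dt$ with eigenvalues $\lambda_n$ ordered by $|\lambda_n|\ge|\lambda_{n+1}|$, extended to entire functions by $\lambda_n\psi_n(x)=\int_{-1}^1\psi_n(t)e^{icxt}\,dt$. $\chi_0<\chi_1<\dots$ are the positive numbers such that $\psi_n$ satisfies $(1-x^2)\psi''(x)-2x\psi'(x)+(\chi_n-c^2x^2)\psi(x)=0$ for all $x$. *)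

(* Defs.v *)
From Stdlib Require Import Reals.
From Coquelicot Require Import Coquelicot.
Open Scope R_scope.

(* psi : R -> R is a real, L^2[-1,1]-normalized eigenfunction of
   F_c[phi](x) = \int_{-1}^1 phi(t) e^{icxt} dt with (nonzero, complex)
   eigenvalue lambda = a + i b, extended to the real line by
   lambda psi(x) = \int_{-1}^1 psi(t) e^{icxt} dt
   (written out as its real and imaginary parts). *)
Definition Fc_real_eigenfunction (c : R) (psi : R -> R) : Prop :=
  is_RInt (fun t => psi t ^ 2) (-1) 1 1 /\
  exists a b : R, (a <> 0 \/ b <> 0) /\
    forall x : R,
      is_RInt (fun t => psi t * cos (c * x * t)) (-1) 1 (a * psi x) /\
      is_RInt (fun t => psi t * sin (c * x * t)) (-1) 1 (b * psi x).

Definition prolate_ode (c chi : R) (psi : R -> R) : Prop :=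
  forall x : R,
    ex_derive psi x /\ ex_derive (Derive psi) x /\
    (1 - x ^ 2) * Derive (Derive psi) x - 2 * x * Derive psi x
      + (chi - c ^ 2 * x ^ 2) * psi x = 0.

(* psi is a prolate spheroidal wave function of band limit c with
   associated ODE eigenvalue chi (i.e. psi = +- psi_n and chi = chi_n
   for some n). *)
Definition is_pswf (c chi : R) (psi : R -> R) : Prop :=
  Fc_real_eigenfunction c psi /\ prolate_ode c chi psi.

(* Main.v *)
Require Import Defs.
From Stdlib Require Import Reals Lra.
From Coquelicot Require Import Coquelicot.
Open Scope R_scope.
Ltac rw H1 H2 :=
  match type of H1 with is_derive ?f ?t ?l =>
    try replace (Derive (fun x => f x) t) with l by (symmetry; apply is_derive_unique; exact H1) end;
  match type of H2 with is_derive ?f ?t ?l =>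
    try replace (Derive (fun x => f x) t) with l by (symmetry; apply is_derive_unique; exact H2) end.

Lemma dW c chi (psi m : R -> R) t dp dm : is_derive psi t dp -> is_derive m t dm ->
  is_derive (fun t => m t ^ 2 + (t^2-1)*(c^2*t^2-chi)*psi t ^2) t
   (2*m t*dm + (4*c^2*t^3 - 2*(chi + c^2)*t)*psi t^2 + 2*(t^2-1)*(c^2*t^2-chi)*psi t*dp).
Proof.
intros H1 H2. auto_derive. repeat split; eexists; eassumption.
rw H1 H2. ring.
Qed.

Lemma dH c chi (psi m : R -> R) t dp dm : is_derive psi t dp -> is_derive m t dm ->
  (t^2-1)*(c^2*t^2-chi) <> 0 ->
  is_derive (fun t => m t ^ 2 / ((t^2-1)*(c^2*t^2-chi)) + psi t ^2) t
   (2*m t*dm/((t^2-1)*(c^2*t^2-chi))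
    - m t^2 * (4*c^2*t^3 - 2*(chi + c^2)*t) / ((t^2-1)*(c^2*t^2-chi))^2
    + 2*psi t*dp).
Proof.
intros H1 H2 Hg. auto_derive. repeat split; try (eexists; eassumption); auto.
rw H1 H2. field. split; intro E; apply Hg; [rewrite Rpow_mult_distr in E|]; rewrite E; ring.
Qed.

Lemma du (psi m : R -> R) t dp dm : is_derive psi t dp -> is_derive m t dm ->
  is_derive (fun t => m t * psi t) t (dm * psi t + m t * dp).
Proof.
intros H1 H2. auto_derive. repeat split; eexists; eassumption.
rw H1 H2. ring.
Qed.

Lemma dE (psi m : R -> R) K t dp dm : is_derive psi t dp -> is_derive m t dm ->
  is_derive (fun t => (psi t ^ 2 + m t ^ 2) * exp (- K * t)) t
   ((2*psi t*dp + 2*m t*dm - K*(psi t^2 + m t^2)) * exp (- K * t)).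
Proof.
intros H1 H2. auto_derive. repeat split; try (eexists; eassumption); auto.
rw H1 H2. ring.
Qed.

Lemma abs_bd a b s K : Rabs s <= K -> 2*a*b*s <= K*(a^2+b^2).
Proof.
intros H. assert (0 <= (a-b)^2) by (apply pow2_ge_0). assert (0 <= (a+b)^2) by (apply pow2_ge_0).
destruct (Rle_dec 0 s).
- rewrite Rabs_right in H by lra.
  assert (s*(a-b)^2 >= 0) by (apply Rle_ge; apply Rmult_le_pos; lra).
  assert ((K-s)*(a^2+b^2) >= 0) by (apply Rle_ge; apply Rmult_le_pos; [lra| pose proof (pow2_ge_0 a); pose proof (pow2_ge_0 b); lra]). nra.
- rewrite Rabs_left in H by lra.
  assert (-s*(a+b)^2 >= 0) by (apply Rle_ge; apply Rmult_le_pos; lra).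
  assert ((K+s)*(a^2+b^2) >= 0) by (apply Rle_ge; apply Rmult_le_pos; [lra| pose proof (pow2_ge_0 a); pose proof (pow2_ge_0 b); lra]). nra.
Qed.
Lemma dM c chi psi : prolate_ode c chi psi -> forall t,
  is_derive (fun t => (t^2-1)*Derive psi t) t (-(c^2*t^2-chi)*psi t).
Proof.
intros H t. destruct (H t) as [h1 [h2 h3]].
auto_derive. auto. change (Derive (fun x : R => Derive psi x) t) with (Derive (Derive psi) t). lra.
Qed.
Lemma mono_le (f df : R -> R) a b : a <= b ->
  (forall t, a <= t <= b -> is_derive f t (df t)) ->
  (forall t, a <= t <= b -> 0 <= df t) -> f a <= f b.
Proof.
intros Hab Hd Hs.
destruct (MVT_gen f a b df) as [z [Hz Heq]].
- rewrite Rmin_left, Rmax_right by lra. intros t Ht. apply Hd. lra.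
- rewrite Rmin_left, Rmax_right by lra. intros t Ht.
  apply continuity_pt_filterlim. apply (ex_derive_continuous (K:=R_AbsRing) (V:=R_NormedModule)).
  eexists; apply Hd; lra.
- rewrite Rmin_left, Rmax_right in Hz by lra.
  assert (0 <= df z) by (apply Hs; lra). nra.
Qed.

Lemma gron c chi psi s y : prolate_ode c chi psi -> 1 < s -> s <= y ->
  psi s = 0 -> Derive psi s = 0 -> Derive psi y = 0.
Proof.
intros Hode Hs Hsy H0 H1.
set (M := fun t => (t^2-1)*Derive psi t).
set (K := / (s^2-1) + c^2*y^2 + Rabs chi).
set (F := fun t => (psi t^2 + M t^2)*exp(-K*t)).
assert (HF : - F s <= - F y).
{ apply (mono_le (fun t => - F t) (fun t => - ((2*psi t*Derive psi t + 2*M t*(-(c^2*t^2-chi)*psi t)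
      - K*(psi t^2 + M t^2)) * exp (- K * t)))).
  - lra.
  - intros t Ht. apply (@is_derive_opp R_AbsRing R_NormedModule). apply dE.
    + destruct (Hode t) as [h _]. destruct h as [l hl]. 
      rewrite (is_derive_unique _ _ _ hl). exact hl.
    + apply (dM c chi psi Hode).
  - intros t Ht. rewrite <- Ropp_0. apply Ropp_le_contravar.
    assert (0 < exp (-K*t)) by apply exp_pos.
    cut (2*psi t*Derive psi t + 2*M t*(-(c^2*t^2-chi)*psi t) <= K*(psi t^2 + M t^2)).
    { intro; nra. }
    assert (Hp : 0 < t^2-1) by nra.
    replace (2*psi t*Derive psi t + 2*M t*(-(c^2*t^2-chi)*psi t))
      with (2*psi t*M t*(/(t^2-1) - (c^2*t^2-chi))) by (unfold M; field; lra).
    apply abs_bd.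
    eapply Rle_trans. apply Rabs_triang. rewrite Rabs_Ropp.
    rewrite Rabs_right by (apply Rle_ge, Rlt_le, Rinv_0_lt_compat; lra).
    assert (/ (t^2-1) <= / (s^2-1)) by (apply Rinv_le_contravar; nra).
    assert (Rabs (c^2*t^2-chi) <= c^2*y^2 + Rabs chi).
    { eapply Rle_trans. unfold Rminus. apply Rabs_triang. rewrite Rabs_Ropp.
      rewrite Rabs_right by (apply Rle_ge; nra).
      assert (c^2*t^2 <= c^2*y^2). { apply Rmult_le_compat_l. nra. nra. } lra. }
    unfold K. lra. }
assert (Fs : F s = 0) by (unfold F, M; rewrite H0, H1; ring).
assert (Hpos: 0 < exp (-K*y)) by apply exp_pos.
assert (Hy : psi y ^2 + M y ^2 <= 0).
{ unfold F in HF, Fs. rewrite Fs in HF. nra. }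
assert (M y = 0) by (pose proof (pow2_ge_0 (psi y)); pose proof (pow2_ge_0 (M y)); nra).
unfold M in H. assert (0 < y^2-1) by nra. nra.
Qed.

Lemma deg c chi psi x : prolate_ode c chi psi -> 1 < x -> psi x = 0 ->
  c^2*x^2 <= chi -> Derive psi x = 0.
Proof.
intros Hode Hx H0 Hq.
destruct (Req_dec (Derive psi x) 0) as [|Hd]; auto. exfalso.
set (M := fun t => (t^2-1)*Derive psi t).
set (u := fun t => M t * psi t).
assert (Hu : forall t, is_derive u t ((-(c^2*t^2-chi)*psi t)*psi t + M t*Derive psi t)).
{ intro t. apply du.
  - destruct (Hode t) as [h _]. destruct h as [l hl].
    rewrite (is_derive_unique _ _ _ hl). exact hl.
  - apply (dM c chi psi Hode). }
set (l := (x^2-1)*Derive psi x ^2).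
assert (Hl : 0 < l).
{ unfold l. apply Rmult_lt_0_compat. nra. apply pow2_gt_0. auto. }
pose proof (Hu x) as Hux. apply is_derive_Reals in Hux.
replace ((-(c^2*x^2-chi)*psi x)*psi x + M x*Derive psi x) with l in Hux
  by (unfold l, M; rewrite H0; ring).
destruct (Hux (l/2)) as [delta Hdel]. lra.
set (h := -(Rmin delta (x-1))/2).
assert (Hm1 : 0 < Rmin delta (x-1)) by (apply Rmin_pos; [apply cond_pos|lra]).
assert (Hm2 : Rmin delta (x-1) <= delta) by apply Rmin_l.
assert (Hm3 : Rmin delta (x-1) <= x-1) by apply Rmin_r.
assert (Hh : h < 0) by (unfold h; lra).
specialize (Hdel h ltac:(lra)).
assert (Habs : Rabs h < delta) by (rewrite Rabs_left by lra; unfold h; lra).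
specialize (Hdel Habs).
assert (Hux0 : u x = 0) by (unfold u; rewrite H0; ring).
rewrite Hux0, Rminus_0_r in Hdel.
apply Rabs_def2 in Hdel. destruct Hdel as [Hd1 Hd2].
assert (Hv : 0 < u (x+h) / h) by lra.
assert (Hneg : u (x+h) < 0).
{ replace (u (x+h)) with (u (x+h) / h * h) by (field; lra). nra. }
assert (Hmono : u 1 <= u (x+h)).
{ apply (mono_le u (fun t => (-(c^2*t^2-chi)*psi t)*psi t + M t*Derive psi t)).
  - unfold h; lra.
  - intros t _. apply Hu.
  - intros t Ht. unfold M.
    assert (c^2*t^2 <= c^2*x^2).
    { apply Rmult_le_compat_l. nra. unfold h in Ht. nra. }
    assert (0 <= t^2-1) by nra.
    pose proof (pow2_ge_0 (psi t)). pose proof (pow2_ge_0 (Derive psi t)).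
    assert (0 <= (chi - c^2*t^2) * psi t^2) by (apply Rmult_le_pos; lra).
    assert (0 <= (t^2-1) * Derive psi t^2) by (apply Rmult_le_pos; lra).
    nra. }
assert (u 1 = 0) by (unfold u, M; ring).
lra.
Qed.

Theorem theorem35 (c chi : R) (psi : R -> R) (x y : R) :
  0 < c ->
  is_pswf c chi psi ->
  chi > c ^ 2 ->
  1 < x -> x < y ->
  psi x = 0 -> psi y = 0 ->
  Rabs (Derive psi x) * ((x ^ 2 - 1) / (y ^ 2 - 1)) <= Rabs (Derive psi y) /\
  Rabs (Derive psi y) <=
    Rabs (Derive psi x) *
      sqrt ((x ^ 2 - 1) / (x ^ 2 - chi / c ^ 2) *
            ((y ^ 2 - chi / c ^ 2) / (y ^ 2 - 1))).
Proof.
intros Hc [_ Hode] Hchi Hx Hxy Hpx Hpy.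
assert (Hpy1 : 0 < y^2-1) by nra.
assert (Hpx1 : 0 < x^2-1) by nra.
destruct (Rle_dec (c^2*x^2) chi) as [Hq|Hq].
{ assert (H1 : Derive psi x = 0) by (apply (deg c chi psi x); auto).
  assert (H2 : Derive psi y = 0) by (apply (gron c chi psi x y); auto; lra).
  rewrite H1, H2, Rabs_R0. split; lra. }
apply Rnot_le_lt in Hq.
set (M := fun t => (t^2-1)*Derive psi t).
assert (Hdp : forall t, is_derive psi t (Derive psi t)).
{ intro t. destruct (Hode t) as [h _]. destruct h as [l hl].
  rewrite (is_derive_unique _ _ _ hl). exact hl. }
assert (HdM := dM c chi psi Hode).
assert (Hg' : forall t, x <= t <= y -> 0 <= 4*c^2*t^3 - 2*(chi + c^2)*t).
{ intros t Ht. assert (c^2*x^2 <= c^2*t^2) by (apply Rmult_le_compat_l; nra).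
  replace (4*c^2*t^3 - 2*(chi + c^2)*t) with (2*t*(2*(c^2*t^2) - chi - c^2)) by ring.
  apply Rmult_le_pos; lra. }
assert (Hqt : forall t, x <= t <= y -> 0 < c^2*t^2 - chi).
{ intros t Ht. assert (c^2*x^2 <= c^2*t^2) by (apply Rmult_le_compat_l; nra). lra. }
split.
- assert (HW : M x ^ 2 + (x^2-1)*(c^2*x^2-chi)*psi x ^2 <= M y ^ 2 + (y^2-1)*(c^2*y^2-chi)*psi y ^2).
  { apply (mono_le (fun t => M t ^ 2 + (t^2-1)*(c^2*t^2-chi)*psi t ^2)
      (fun t => 2*M t*(-(c^2*t^2-chi)*psi t) + (4*c^2*t^3 - 2*(chi + c^2)*t)*psi t^2
               + 2*(t^2-1)*(c^2*t^2-chi)*psi t*Derive psi t)).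
    - lra.
    - intros t _. apply dW; auto.
    - intros t Ht. unfold M.
      replace (2 * ((t ^ 2 - 1) * Derive psi t) * (- (c ^ 2 * t ^ 2 - chi) * psi t) +
        (4 * c ^ 2 * t ^ 3 - 2 * (chi + c ^ 2) * t) * psi t ^ 2 +
        2 * (t ^ 2 - 1) * (c ^ 2 * t ^ 2 - chi) * psi t * Derive psi t)
       with ((4 * c ^ 2 * t ^ 3 - 2 * (chi + c ^ 2) * t) * psi t ^ 2) by ring.
      apply Rmult_le_pos. apply Hg'; auto. apply pow2_ge_0. }
  rewrite Hpx, Hpy in HW.
  assert (HA : Rabs (M x) <= Rabs (M y)).
  { apply Rsqr_le_abs_0. unfold Rsqr. lra. }
  unfold M in HA. rewrite !Rabs_mult, (Rabs_right (x^2-1)), (Rabs_right (y^2-1)) in HA by lra.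
  replace (Rabs (Derive psi x) * ((x ^ 2 - 1) / (y ^ 2 - 1)))
    with ((x ^ 2 - 1) * Rabs (Derive psi x) * / (y ^ 2 - 1)) by (field; lra).
  apply Rle_trans with ((y ^ 2 - 1) * Rabs (Derive psi y) * / (y ^ 2 - 1)).
  apply Rmult_le_compat_r. left; apply Rinv_0_lt_compat; lra. exact HA.
  right; field; lra.
- assert (HH : - (M x ^ 2 / ((x^2-1)*(c^2*x^2-chi)) + psi x ^2) <=
               - (M y ^ 2 / ((y^2-1)*(c^2*y^2-chi)) + psi y ^2)).
  { apply (mono_le (fun t => - (M t ^ 2 / ((t^2-1)*(c^2*t^2-chi)) + psi t ^2))
      (fun t => - (2*M t*(-(c^2*t^2-chi)*psi t)/((t^2-1)*(c^2*t^2-chi))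
    - M t^2 * (4*c^2*t^3 - 2*(chi + c^2)*t) / ((t^2-1)*(c^2*t^2-chi))^2
    + 2*psi t*Derive psi t))).
    - lra.
    - intros t Ht. apply (@is_derive_opp R_AbsRing R_NormedModule). apply dH; auto.
      assert (0 < c^2*t^2-chi) by (apply Hqt; auto).
      assert (0 < t^2-1) by nra.
      apply Rgt_not_eq. apply Rmult_lt_0_compat; lra.
    - intros t Ht.
      assert (0 < c^2*t^2-chi) by (apply Hqt; auto).
      assert (0 < t^2-1) by nra.
      unfold M.
      replace (- (2 * ((t ^ 2 - 1) * Derive psi t) * (- (c ^ 2 * t ^ 2 - chi) * psi t) /
        ((t ^ 2 - 1) * (c ^ 2 * t ^ 2 - chi)) -
        ((t ^ 2 - 1) * Derive psi t) ^ 2 * (4 * c ^ 2 * t ^ 3 - 2 * (chi + c ^ 2) * t) /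
        ((t ^ 2 - 1) * (c ^ 2 * t ^ 2 - chi)) ^ 2 + 2 * psi t * Derive psi t))
       with (Derive psi t ^ 2 * (4 * c ^ 2 * t ^ 3 - 2 * (chi + c ^ 2) * t) /
             (c ^ 2 * t ^ 2 - chi) ^ 2) by (field; lra).
      apply Rmult_le_pos. apply Rmult_le_pos. apply pow2_ge_0. apply Hg'; auto.
      left. apply Rinv_0_lt_compat. apply pow2_gt_0. lra. }
  rewrite Hpx, Hpy in HH. unfold M in HH.
  assert (Hqy : 0 < c^2*y^2-chi) by (apply Hqt; lra).
  replace (- (((x ^ 2 - 1) * Derive psi x) ^ 2 / ((x ^ 2 - 1) * (c ^ 2 * x ^ 2 - chi)) + 0 ^ 2))
    with (- ((x^2-1) * Derive psi x ^ 2 / (c ^ 2 * x ^ 2 - chi))) in HH by (field; lra).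
  replace (- (((y ^ 2 - 1) * Derive psi y) ^ 2 / ((y ^ 2 - 1) * (c ^ 2 * y ^ 2 - chi)) + 0 ^ 2))
    with (- ((y^2-1) * Derive psi y ^ 2 / (c ^ 2 * y ^ 2 - chi))) in HH by (field; lra).
  set (S := (x ^ 2 - 1) / (x ^ 2 - chi / c ^ 2) * ((y ^ 2 - chi / c ^ 2) / (y ^ 2 - 1))).
  assert (HS : S = (x^2-1)*(c^2*y^2-chi)/((c^2*x^2-chi)*(y^2-1))).
  { unfold S. field. repeat split; try lra. }
  assert (HS0 : 0 <= S).
  { rewrite HS. left. apply Rdiv_lt_0_compat; apply Rmult_lt_0_compat; lra. }
  assert (Hineq : Derive psi y ^ 2 <= Derive psi x ^ 2 * S).
  { rewrite HS.
    assert (K1 : (y^2-1) * Derive psi y ^ 2 / (c ^ 2 * y ^ 2 - chi) <=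
                 (x^2-1) * Derive psi x ^ 2 / (c ^ 2 * x ^ 2 - chi)) by lra.
    apply (Rmult_le_compat_r ((c ^ 2 * y ^ 2 - chi)/(y^2-1))) in K1.
    2: { left. apply Rdiv_lt_0_compat; lra. }
    replace ((y^2-1) * Derive psi y ^ 2 / (c ^ 2 * y ^ 2 - chi) * ((c ^ 2 * y ^ 2 - chi)/(y^2-1)))
      with (Derive psi y ^ 2) in K1 by (field; lra).
    eapply Rle_trans. exact K1. right. field. lra. }
  rewrite <- (sqrt_Rsqr_abs (Derive psi y)), <- (sqrt_Rsqr_abs (Derive psi x)).
  rewrite <- sqrt_mult_alt by apply Rle_0_sqr.
  apply sqrt_le_1_alt. unfold Rsqr. lra.
Qed.
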